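(* Let $n\ge 3$. For every integer $m\ge 3$, the map $d'_m:\mathcal{C}_n\times\mathcal{C}_n\to\mathbb{R}$ is a metric on $\mathcal{C}_n$ (in particular, the quotient defining it is finite).
   Context: For $n\ge1$ let $[n]=\{1,\dots,n\}$. A contact structure of length $n$ is a simple undirected graph $\Gamma=([n],Q)$ (no self-loops, no multiple edges) such that $\{i,i+1\}\notin Q$ for every $i$; its edges are called contacts, written $i\cdot j$. $\mathcal{C}_n$ is the set of all contact structures of length $n$. $\mathbb{F}_2=\mathbb{Z}/2\mathbb{Z}$. The edge ideal $I_\Gamma$ of $\Gamma=([n],Q)$ is the ideal of $\mathbb{F}_2[x_1,\dots,x_n]$ generated by $\{x_ix_j:i\cdot j\in Q\}$. For $m\ge3$ let $R_{n,m}=\mathbb{F}_2[x_1,\dots,x_n]/\langle \text{all monomials of total degree } m\rangle$ and $\pi_m$ the quotient map; for an ideal $I$, $\pi_m(I)$ is its image, an additive subgroup of $R_{n,m}$. Define $d'_m(\Gamma_1,\Gamma_2)=\log_2\Bigl|\dfrac{\pi_m(I_{\Gamma_1})+\pi_m(I_{\Gamma_2})}{\pi_m(I_{\Gamma_1})\cap\pi_m(I_{\Gamma_2})}\Bigr|$, the base-2 logarithm of the cardinality of the quotient of additive groups. *)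

(* Defs.v *)
From HB Require Import structures.
From mathcomp Require Import all_boot all_algebra.
From mathcomp Require Import mpoly.
From Stdlib Require Import ClassicalEpsilon.
From Stdlib Require Rdefinitions Raxioms Rfunctions Rpower.

Set Implicit Arguments.
Unset Strict Implicit.
Unset Printing Implicit Defensive.

Import GRing.Theory.
Local Open Scope ring_scope.

(* Vertices [n] = {1,...,n} are represented by 'I_n = {0,...,n-1}
   (vertex k+1 <-> ordinal k).  An edge (contact) i.j is the 2-element
   set {i, j}; a graph on [n] is its set of edges. *)

Definition is_contact_structure (n : nat) (Q : {set {set 'I_n}}) : bool :=
  [forall e in Q,
     (#|e| == 2)%N &&
     ~~ [exists i : 'I_n, exists j : 'I_n,
           (nat_of_ord j == (nat_of_ord i).+1)%N && (e == [set i; j])]].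

Definition edge_monomial (n : nat) (e : {set 'I_n}) : {mpoly 'F_2[n]} :=
  \prod_(i in e) 'X_i.

Definition in_edge_ideal (n : nat) (Q : {set {set 'I_n}})
  (p : {mpoly 'F_2[n]}) : Prop :=
  exists c : {set 'I_n} -> {mpoly 'F_2[n]},
    p = \sum_(e in Q) c e * edge_monomial e.

(* R_{n,m} = F_2[x]/<all monomials of degree m>.  The monomials of degree
   < m form an F_2-basis of R_{n,m}, so (as an additive group) R_{n,m} is
   the group of F_2-valued functions on monomials of degree < m, and the
   quotient map pi_m sends p to its coefficients on those monomials. *)
Definition Rnm (n m : nat) := {ffun 'X_{1..n < m} -> 'F_2}.

Definition pi_m (n m : nat) (p : {mpoly 'F_2[n]}) : Rnm n m :=
  [ffun b : 'X_{1..n < m} => p@_(bmnm b)].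

Definition asb (P : Prop) : bool :=
  if excluded_middle_informative P then true else false.

Definition pi_ideal (n m : nat) (Q : {set {set 'I_n}}) : {set Rnm n m} :=
  [set x : Rnm n m | asb (exists p, in_edge_ideal Q p /\ pi_m m p = x)].

Definition set_add (G : finType) (addG : G -> G -> G) (A B : {set G}) : {set G} :=
  [set addG a b | a in A, b in B].

Definition cosets (G : finType) (addG : G -> G -> G) (S C : {set G}) :
  {set {set G}} :=
  [set [set addG x c | c in C] | x in S].

Definition log2 (x : Rdefinitions.R) : Rdefinitions.R :=
  Rdefinitions.Rdiv (Rpower.ln x) (Rpower.ln (Rdefinitions.IZR (BinNums.Zpos (BinNums.xO BinNums.xH)))).

Definition dprime (n m : nat) (Q1 Q2 : {set {set 'I_n}}) : Rdefinitions.R :=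
  let A1 := pi_ideal m Q1 in
  let A2 := pi_ideal m Q2 in
  log2 (Raxioms.INR
          #|cosets (fun x y : Rnm n m => x + y)
                   (set_add (fun x y : Rnm n m => x + y) A1 A2)
                   (A1 :&: A2)|).

Definition is_metric_on_contact (n : nat)
  (d : {set {set 'I_n}} -> {set {set 'I_n}} -> Rdefinitions.R) : Prop :=
  (forall Q1 Q2, is_contact_structure Q1 -> is_contact_structure Q2 ->
     Rdefinitions.Rle (Rdefinitions.IZR BinNums.Z0) (d Q1 Q2)) /\
  (forall Q1 Q2, is_contact_structure Q1 -> is_contact_structure Q2 ->
     (d Q1 Q2 = Rdefinitions.IZR BinNums.Z0 <-> Q1 = Q2)) /\
  (forall Q1 Q2, is_contact_structure Q1 -> is_contact_structure Q2 ->
     d Q1 Q2 = d Q2 Q1) /\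
  (forall Q1 Q2 Q3, is_contact_structure Q1 -> is_contact_structure Q2 ->
     is_contact_structure Q3 ->
     Rdefinitions.Rle (d Q1 Q3) (Rdefinitions.Rplus (d Q1 Q2) (d Q2 Q3))).

(* Main.v *)
Require Import Defs.
From HB Require Import structures.
From mathcomp Require Import all_boot all_algebra mpoly ring.
From Stdlib Require Import ClassicalEpsilon.
Set Implicit Arguments. Unset Strict Implicit. Unset Printing Implicit Defensive.
Import GRing.Theory.
Local Open Scope ring_scope.

Lemma F2xx (y : 'F_2) : y + y = 0.
Proof. by rewrite -mulr2n -mulr_natr pchar_Fp_0 // mulr0. Qed.

Section Grp.
Variables n m : nat.
Local Notation G := (Rnm n m).
Implicit Types A B C S : {set G}.

Lemma addxx (x : G) : x + x = 0.
Proof. by apply/ffunP => b; rewrite !ffunE F2xx. Qed.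

Definition sgrp A := 0 \in A /\ (forall x y, x \in A -> y \in A -> x + y \in A).
Local Notation sadd := (set_add (fun x y : G => x + y)).

Lemma sgrp_add A B : sgrp A -> sgrp B -> sgrp (sadd A B).
Proof.
move=> [A0 AD] [B0 BD]; split.
  by apply/imset2P; exists (0:G) (0:G) => //; rewrite addr0.
move=> x y /imset2P [a b Ha Hb ->] /imset2P [a' b' Ha' Hb' ->].
by apply/imset2P; exists (a + a') (b + b'); rewrite ?AD ?BD // addrACA.
Qed.

Lemma sgrp_cap A B : sgrp A -> sgrp B -> sgrp (A :&: B).
Proof.
move=> [A0 AD] [B0 BD]; split; first by rewrite inE A0 B0.
by move=> x y; rewrite !inE => /andP [? ?] /andP [? ?]; rewrite AD ?BD.
Qed.

Lemma sadd_subl A B : sgrp B -> A \subset sadd A B.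
Proof. by move=> [B0 _]; apply/subsetP => a Ha; apply/imset2P; exists a (0:G); rewrite ?addr0. Qed.

Lemma sadd_subr A B : sgrp A -> B \subset sadd A B.
Proof. by move=> [A0 _]; apply/subsetP => b Hb; apply/imset2P; exists (0:G) b; rewrite ?add0r. Qed.

Lemma sadd_min A B S : sgrp S -> A \subset S -> B \subset S -> sadd A B \subset S.
Proof.
move=> [_ SD] /subsetP AS /subsetP BS; apply/subsetP => x /imset2P [a b Ha Hb ->].
exact: SD (AS _ Ha) (BS _ Hb).
Qed.

Lemma saddC A B : sadd A B = sadd B A.
Proof.
apply/setP => x; apply/idP/idP => /imset2P [a b Ha Hb ->]; apply/imset2P; exists b a; by rewrite // addrC.
Qed.

Definition cos C (x : G) := [set x + c | c in C].

Lemma cos_shift C y c : sgrp C -> c \in C -> cos C (y + c) = cos C y.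
Proof.
move=> [C0 CD] Hc; apply/setP => z; apply/imsetP/imsetP => -[c' Hc' ->].
  by exists (c + c'); rewrite ?CD // addrA.
by exists (c + c'); rewrite ?CD // addrA -(addrA y c c) addxx addr0.
Qed.

Lemma card_cos C x : #|cos C x| = #|C|.
Proof. by rewrite card_imset //; apply: addrI. Qed.

Lemma card_cosets C S : sgrp C -> sgrp S -> C \subset S ->
  (#|cosets (fun x y : G => (x + y)%R) S C| * #|C| = #|S|)%N.
Proof.
move=> gC gS /subsetP CS.
rewrite -[RHS]sum1_card (partition_big (cos C) (mem (cosets (fun x y : G => x + y) S C))); last first.
  by move=> x Hx; apply/imsetP; exists x.
rewrite -sum_nat_const; apply: eq_bigr => X /imsetP [y Hy ->].
rewrite sum1_card -(card_cos C y); apply: eq_card => x /=.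
rewrite [in RHS]unfold_in /=; apply/idP/andP.
  move=> /imsetP [c Hc ->]; split; first by case: gS => _ SD; exact: SD _ _ Hy (CS _ Hc).
  by rewrite cos_shift.
by move=> [_ /eqP E]; rewrite /cos -E; apply/imsetP; exists 0; rewrite ?addr0 //; case: gC.
Qed.

Lemma card_sadd A B : sgrp A -> sgrp B ->
  (#|sadd A B| * #|A :&: B| = #|A| * #|B|)%N.
Proof.
move=> gA gB; transitivity (\sum_(p in setX A B) 1)%N; last by rewrite sum1_card cardsX.
rewrite (partition_big (fun p : G * G => p.1 + p.2) (mem (sadd A B))); last first.
  move=> [a b]; rewrite inE /= => /andP [Ha Hb]. by apply/imset2P; exists a b.
rewrite -sum_nat_const; apply: eq_bigr => s /imset2P [a0 b0 Ha0 Hb0 ->].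
rewrite sum1_card.
have inj : injective (fun d : G => (a0 + d, b0 + d)).
  by move=> d d' [] /addrI.
rewrite -(card_imset (mem (A :&: B)) inj); apply: eq_card => -[a b].
have xxK : forall x y : G, x + (x + y) = y by move=> x y; rewrite addrA addxx add0r.
case: gA => _ AD; case: gB => _ BD.
rewrite [in RHS]unfold_in /= inE /=; apply/imsetP/andP.
  move=> [d Hd [-> ->]]; rewrite inE in Hd; case/andP: Hd => HdA HdB.
  split; first by rewrite AD ?BD.
  by rewrite addrACA addxx addr0.
move=> [/andP [Ha Hb] /eqP E].
have Ea : a = a0 + b0 + b by rewrite -E -addrA addxx addr0.
have Ed : a0 + a = b0 + b by rewrite Ea -addrA xxK.
exists (a0 + a); first by rewrite inE AD //= Ed BD.
by rewrite xxK Ed xxK.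
Qed.
End Grp.
Lemma asbP (P : Prop) : asb P = true <-> P.
Proof. by rewrite /asb; case: excluded_middle_informative. Qed.

Section Idl.
Variable n : nat.
Implicit Types e f : {set 'I_n}.

Definition me e : 'X_{1..n} := (\sum_(i in e) U_(i))%MM.

Lemma edge_monoE e : edge_monomial e = 'X_[me e].
Proof. by rewrite /edge_monomial /me (big_morph _ (@mpolyXD _ _) (@mpolyX0 _ _)). Qed.

Lemma meE e i : me e i = (i \in e).
Proof.
rewrite /me mnm_sumE; case: (boolP (i \in e)) => Hi.
  rewrite (bigD1 i) //= mnm1E eqxx big1 // => k /andP [_ Hk].
  by rewrite mnm1E (negbTE Hk).
by rewrite big1 // => k Hk; rewrite mnm1E; case: eqP => // E; move: Hk; rewrite E (negbTE Hi).
Qed.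

Lemma mdeg_me e : mdeg (me e) = #|e|.
Proof. by rewrite /me mdeg_sum -sum1_card; apply: eq_bigr => i _; rewrite mdeg1. Qed.

Lemma coef_vanish (q : {mpoly 'F_2[n]}) e f : #|f| = #|e| -> f != e ->
  (q * edge_monomial f)@_(me e) = 0.
Proof.
move=> Hc Hne; apply/eqP; apply: contraR Hne; rewrite -mcoeff_msupp edge_monoE.
rewrite (perm_mem (msuppMX q (me f))) => /mapP [m' _ E].
have sub : f \subset e.
  apply/subsetP => i Hi; have := congr1 (fun mm : 'X_{1..n} => mm i) E.
  rewrite /= mnmDE !meE Hi; by case: (i \in e).
by rewrite eqEcard sub Hc leqnn.
Qed.

Lemma ideal_coef_vanish Q (p : {mpoly 'F_2[n]}) e :
  is_contact_structure Q -> in_edge_ideal Q p -> #|e| = 2%N -> e \notin Q ->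
  p@_(me e) = 0.
Proof.
move=> /forall_inP HQ [c ->] He HeQ; rewrite raddf_sum /=; apply: big1 => f Hf.
apply: coef_vanish; first by case/andP: (HQ f Hf) => /eqP -> _.
by apply: contraNneq HeQ => <-.
Qed.

End Idl.

Section Pi.
Variables n m : nat.
Implicit Types Q : {set {set 'I_n}}.

Lemma pi_mD (p q : {mpoly 'F_2[n]}) : pi_m m (p + q) = pi_m m p + pi_m m q.
Proof. by apply/ffunP => b; rewrite !ffunE mcoeffD. Qed.

Lemma pi_m0 : pi_m m (0 : {mpoly 'F_2[n]}) = 0.
Proof. by apply/ffunP => b; rewrite !ffunE mcoeff0. Qed.

Lemma in_pi_ideal Q x :
  (x \in pi_ideal m Q) <-> exists p, in_edge_ideal Q p /\ pi_m m p = x.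
Proof. by rewrite inE; apply: asbP. Qed.

Lemma sgrp_pi Q : sgrp (pi_ideal m Q).
Proof.
split.
  apply/in_pi_ideal; exists 0; split; last exact: pi_m0.
  by exists (fun _ => 0); rewrite big1 // => e _; rewrite mul0r.
move=> x y /in_pi_ideal [p [[c1 Hp] <-]] /in_pi_ideal [q [[c2 Hq] <-]].
apply/in_pi_ideal; exists (p + q); split; last exact: pi_mD.
exists (fun e => c1 e + c2 e); rewrite Hp Hq -big_split; apply: eq_bigr => e _.
by rewrite mulrDl.
Qed.

Lemma gen_in Q e : e \in Q -> in_edge_ideal Q (edge_monomial e).
Proof.
move=> He; exists (fun f => (f == e)%:R); rewrite (bigD1 e) //= eqxx mul1r big1 ?addr0 //.
by move=> f /andP [_ /negbTE ->]; rewrite mul0r.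
Qed.

Lemma pi_ideal_inj Q1 Q2 : (3 <= m)%N -> is_contact_structure Q1 ->
  is_contact_structure Q2 -> pi_ideal m Q1 = pi_ideal m Q2 -> Q1 \subset Q2.
Proof.
move=> hm H1 H2 E; apply/subsetP => e He.
have Hc : #|e| = 2%N by case/andP: (forall_inP H1 e He) => /eqP.
apply: contraT => HeQ.
have hb : (mdeg (me e) < m)%N by rewrite mdeg_me Hc.
pose b : 'X_{1..n < m} := BMultinom hb.
have : pi_m m (edge_monomial e) \in pi_ideal m Q2.
  rewrite -E; apply/in_pi_ideal; exists (edge_monomial e); split => //; exact: gen_in.
move/in_pi_ideal => [p [Hp Hpx]].
have := congr1 (fun x : Rnm n m => x b) Hpx; rewrite !ffunE /= (ideal_coef_vanish H2 Hp Hc HeQ).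
rewrite edge_monoE mcoeffX eqxx.
by move/eqP; rewrite eq_sym oner_eq0.
Qed.
End Pi.

Section Fin.
Variables n m : nat.
Local Notation G := (Rnm n m).
Local Notation sadd := (set_add (fun x y : G => x + y)).
Implicit Types A B C : {set G}.

Definition NN A B := #|cosets (fun x y : G => x + y) (sadd A B) (A :&: B)|.

Lemma card_pos A : sgrp A -> (0 < #|A|)%N.
Proof. by case=> A0 _; rewrite card_gt0; apply/set0Pn; exists 0. Qed.

Lemma NN_facts A B : sgrp A -> sgrp B ->
  [/\ (NN A B * #|A :&: B| = #|sadd A B|)%N,
      (#|sadd A B| * #|A :&: B| = #|A| * #|B|)%N & (0 < #|A :&: B|)%N].
Proof.
move=> gA gB; split; last exact/card_pos/sgrp_cap.
  apply: card_cosets; [exact: sgrp_cap | exact: sgrp_add |].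
  exact: subset_trans (subsetIl A B) (sadd_subl A gB).
exact: card_sadd.
Qed.

Lemma NN_pos A B : sgrp A -> sgrp B -> (0 < NN A B)%N.
Proof.
move=> gA gB; case: (NN_facts gA gB) => h _ _.
have := card_pos (sgrp_add gA gB); rewrite -h muln_gt0; by case/andP.
Qed.

Lemma NN_sym A B : NN A B = NN B A.
Proof. by rewrite /NN saddC setIC. Qed.

Lemma NN_refl A : sgrp A -> NN A A = 1%N.
Proof.
move=> gA; case: (NN_facts gA gA) => h1 h2 _; rewrite setIid in h1 h2.
have ha := card_pos gA.
have hs : #|sadd A A| = #|A| by apply/eqP; rewrite -(eqn_pmul2r ha) h2.
by apply/eqP; rewrite -(eqn_pmul2r ha) mul1n h1 hs.
Qed.

Lemma NN_eq1 A B : sgrp A -> sgrp B -> NN A B = 1%N -> A = B.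
Proof.
move=> gA gB h1; case: (NN_facts gA gB); rewrite h1 mul1n => hs _ _.
have sub : A :&: B \subset sadd A B := subset_trans (subsetIl A B) (sadd_subl A gB).
have E : sadd A B = A :&: B.
  by apply/eqP; rewrite eq_sym eqEcard sub /= hs leqnn.
apply/eqP; rewrite eqEsubset; apply/andP; split.
  by apply: subset_trans (sadd_subl A gB) _; rewrite E subsetIr.
by apply: subset_trans (sadd_subr B gA) _; rewrite E subsetIl.
Qed.

Lemma NN_tri A B C : sgrp A -> sgrp B -> sgrp C ->
  (NN A C <= NN A B * NN B C)%N.
Proof.
move=> gA gB gC.
case: (NN_facts gA gB) => n12 s12 _.
case: (NN_facts gB gC) => n23 s23 _.
case: (NN_facts gA gC) => n13 s13 _.
have gP := sgrp_add gA gB; have gQ := sgrp_add gB gC.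
case: (NN_facts gP gQ) => _ sPQ _.
have le1 : (#|sadd A C| <= #|sadd (sadd A B) (sadd B C)|)%N.
  apply: subset_leq_card; apply: sadd_min (sgrp_add gP gQ) _ _.
    exact: subset_trans (sadd_subl A gB) (sadd_subl _ gQ).
  exact: subset_trans (sadd_subr C gB) (sadd_subr _ gP).
have le2 : (#|B| <= #|sadd A B :&: sadd B C|)%N.
  by apply: subset_leq_card; rewrite subsetI sadd_subr // sadd_subl.
have key : (#|sadd A C| * #|B| <= #|sadd A B| * #|sadd B C|)%N.
  by rewrite -sPQ leq_mul.
have ha := card_pos gA; have hb := card_pos gB; have hc := card_pos gC.
rewrite -(leq_pmul2r (_ : 0 < #|A| * #|C| * (#|B| * #|B|))%N); last first.
  by rewrite !muln_gt0 ha hb hc.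
have E13 : (NN A C * (#|A| * #|C|) = #|sadd A C| * #|sadd A C|)%N.
  by rewrite -s13 mulnCA n13.
have E12 : (NN A B * (#|A| * #|B|) = #|sadd A B| * #|sadd A B|)%N.
  by rewrite -s12 mulnCA n12.
have E23 : (NN B C * (#|B| * #|C|) = #|sadd B C| * #|sadd B C|)%N.
  by rewrite -s23 mulnCA n23.
have -> : (NN A C * (#|A| * #|C| * (#|B| * #|B|)) =
     (#|sadd A C| * #|B|) * (#|sadd A C| * #|B|))%N.
  by rewrite mulnA E13; ring.
have -> : (NN A B * NN B C * (#|A| * #|C| * (#|B| * #|B|)) =
     (#|sadd A B| * #|sadd B C|) * (#|sadd A B| * #|sadd B C|))%N.
  transitivity ((NN A B * (#|A| * #|B|)) * (NN B C * (#|B| * #|C|)))%N; first ring.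
  by rewrite E12 E23; ring.
exact: leq_mul.
Qed.
End Fin.

Module ReL.
From Stdlib Require Import Reals Lra.
Section Re.
Local Open Scope R_scope.

Lemma ln2_pos : 0 < ln 2.
Proof. rewrite -ln_1; apply: ln_increasing; lra. Qed.

Lemma log2E x : log2 x = ln x / ln 2.
Proof. reflexivity. Qed.

Lemma INR_pos k : (leq 1 k) -> 0 < INR k.
Proof. by move=> /ltP h; apply: lt_0_INR. Qed.

Lemma log2_ge0 k : (leq 1 k) -> 0 <= log2 (INR k).
Proof.
move=> hk; rewrite log2E; apply: Rmult_le_pos; last by apply/Rlt_le/Rinv_0_lt_compat/ln2_pos.
have : 1 <= INR k by apply: (le_INR 1); apply/leP.
case=> h; last by rewrite -h ln_1; lra.
by apply/Rlt_le; rewrite -ln_1; apply: ln_increasing; lra.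
Qed.

Lemma log2_1 : log2 (INR 1) = 0.
Proof. by rewrite log2E /= ln_1 /Rdiv Rmult_0_l. Qed.

Lemma log2_eq0 k : (leq 1 k) -> log2 (INR k) = 0 -> k = 1%nat.
Proof.
move=> hk; rewrite log2E => h.
have h0 : ln (INR k) = 0.
  have := ln2_pos => hp; apply: (Rmult_eq_reg_r (/ ln 2)); last by apply/Rinv_neq_0_compat; lra.
  by rewrite Rmult_0_l.
have : INR k = INR 1 by apply: ln_inv; [exact: INR_pos | rewrite /=; lra | rewrite h0 /= ln_1].
exact: INR_eq.
Qed.

Lemma log2_tri a b c : (leq 1 a) -> (leq 1 b) -> (leq 1 c) -> (leq c (muln a b)) ->
  log2 (INR c) <= log2 (INR a) + log2 (INR b).
Proof.
move=> ha hb hc hcab; rewrite !log2E -Rdiv_plus_distr /Rdiv.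
apply: Rmult_le_compat_r; first by apply/Rlt_le/Rinv_0_lt_compat/ln2_pos.
rewrite -ln_mult; [| exact: INR_pos | exact: INR_pos].
rewrite -mult_INR.
have H : INR c <= INR (a * b) by apply: le_INR; apply/leP.
case: (Rle_lt_or_eq_dec _ _ H) => h; last by rewrite h; apply: Rle_refl.
by apply/Rlt_le/ln_increasing => //; exact: INR_pos.
Qed.
End Re.
End ReL.

Lemma dprimeE n m (Q1 Q2 : {set {set 'I_n}}) :
  dprime m Q1 Q2 = log2 (Raxioms.INR (NN (pi_ideal m Q1) (pi_ideal m Q2))).
Proof. reflexivity. Qed.

Theorem mainTheorem3 (n : nat) (hn : (3 <= n)%N) :
  forall m : nat, (3 <= m)%N -> is_metric_on_contact (@dprime n m).
Proof.
move=> m hm; split; [|split; [|split]].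
- by move=> Q1 Q2 _ _; rewrite dprimeE; apply: ReL.log2_ge0; apply: NN_pos; apply: sgrp_pi.
- move=> Q1 Q2 H1 H2; rewrite dprimeE; split.
    move=> /ReL.log2_eq0 h.
    have E := NN_eq1 (sgrp_pi _ _) (sgrp_pi _ _) (h (NN_pos (sgrp_pi _ _) (sgrp_pi _ _))).
    apply/eqP; rewrite eqEsubset (pi_ideal_inj hm H1 H2 E).
    exact: (pi_ideal_inj hm H2 H1 (esym E)).
  by move=> <-; rewrite NN_refl ?ReL.log2_1 //; apply: sgrp_pi.
- by move=> Q1 Q2 _ _; rewrite !dprimeE NN_sym.
- move=> Q1 Q2 Q3 _ _ _; rewrite !dprimeE.
  apply: ReL.log2_tri; try apply: NN_pos; try apply: sgrp_pi.
  by apply: NN_tri; apply: sgrp_pi.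
Qed.
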